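(* Let $X$ be a $T_1$ topological space. Then $C(X)_F\subseteq T''(X)$ (so that $C(X)_F$ is a subring of $T''(X)$) if and only if $X$ is a nowhere almost $P$-space.
   Context: $C(X)$ is the ring of real-valued continuous functions on $X$; a cozero set is a set $\{x: h(x)\neq 0\}$ with $h\in C(X)$. $T''(X)$ is the ring of all functions $f\colon X\to\mathbb{R}$ for which there is a dense cozero set $U$ of $X$ with $f|_U$ continuous. $C(X)_F$ is the ring of all functions $f\colon X\to\mathbb{R}$ whose set of points of discontinuity is finite. $\chi_A$ is the characteristic function of $A$. $X$ is a nowhere almost $P$-space if $\chi_{\{p\}}\in T''(X)$ for all $p\in X$. *)

(* Defs.v *)
From HB Require Import structures.
From mathcomp Require Import all_boot all_order all_algebra.
From mathcomp Require Import all_classical all_reals all_analysis.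
Set Implicit Arguments. Unset Strict Implicit. Unset Printing Implicit Defensive.
Import Order.TTheory GRing.Theory Num.Theory numFieldNormedType.Exports.
Local Open Scope classical_set_scope.
Local Open Scope ring_scope.

(* The reals are modelled by an arbitrary R : realType (any two are isomorphic). *)

Definition cozero_set (R : realType) (X : topologicalType) (U : set X) : Prop :=
  exists h : X -> R, continuous h /\ U = [set x | h x != 0].

Definition Tpp (R : realType) (X : topologicalType) (f : X -> R) : Prop :=
  exists U : set X, cozero_set R U /\ dense U /\ {within U, continuous f}.

Definition CF (R : realType) (X : topologicalType) (f : X -> R) : Prop :=
  finite_set [set x | ~ {for x, continuous f}].

Definition nowhere_almost_P (R : realType) (X : topologicalType) : Prop :=
  forall p : X, Tpp (\1_[set p] : X -> R).

(* Main.v *)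
Require Import Defs.
From HB Require Import structures.
From mathcomp Require Import all_boot all_order all_algebra.
From mathcomp Require Import all_classical all_reals all_analysis.
Local Open Scope classical_set_scope.
Local Open Scope ring_scope.

Import Order.TTheory GRing.Theory Num.Theory numFieldNormedType.Exports.

Lemma cozero_open (R : realType) (X : topologicalType) (U : set X) :
  cozero_set R U -> open U.
Proof.
move=> [h [ch ->]].
have -> : [set x | h x != 0] = h @^-1` (~` [set 0]).
  by apply/seteqP; split => x /=; move/eqP.
apply: open_comp; first by move=> x _; exact: ch.
exact/closed_openC/accessible_closed_set1/hausdorff_accessible/Rhausdorff.
Qed.

Lemma cozeroI (R : realType) (X : topologicalType) (U V : set X) :
  cozero_set R U -> cozero_set R V -> cozero_set R (U `&` V).
Proof.
move=> [h [ch ->]] [g [cg ->]]; exists (h \* g); split.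
  by move=> x; apply: continuousM; [exact: ch|exact: cg].
by apply/seteqP; split => x /=; rewrite mulf_eq0 negb_or => /andP.
Qed.

Lemma cozeroT (R : realType) (X : topologicalType) : cozero_set R (@setT X).
Proof.
exists (fun=> 1); split; first exact: cst_continuous.
by apply/seteqP; split => x //= _; exact: oner_neq0.
Qed.

Lemma isolated_cont (X Y : topologicalType) (f : X -> Y) (p : X) :
  nbhs p [set p] -> {for p, continuous f}.
Proof.
move=> Hp; apply: (@near_cst_continuous _ _ (f p)).
by apply: filterS Hp => x ->.
Qed.

Lemma key (R : realType) (X : topologicalType) (p : X) (U : set X) :
  cozero_set R U -> {within U, continuous (\1_[set p] : X -> R)} -> U p ->
  nbhs p [set p].
Proof.
move=> cU cont Up.
have oU := @cozero_open R X U cU.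
have nU : nbhs p U by apply: open_nbhs_nbhs; split.
move/subspace_continuousP : cont => /(_ p Up).
have nB : nbhs ((\1_[set p] : X -> R) p) (~` [set (0:R)]).
  apply: open_nbhs_nbhs; split.
    exact/closed_openC/accessible_closed_set1/hausdorff_accessible/Rhausdorff.
  by rewrite indicE mem_set //= => /eqP; rewrite oner_eq0.
move=> /(_ _ nB); rewrite nbhs_simpl /= /within /=.
move=> H.
have {}H : nbhs p (fun x => U x -> ~ ((\1_[set p] x : R) = 0)) := H.
apply: filterS2 H nU => x H Ux.
have := H Ux; rewrite indicE.
by case: (boolP (x \in [set p])) => [/set_mem //|_] /=; rewrite mulr0n.
Qed.

Lemma avoid (R : realType) (X : topologicalType) (nap : nowhere_almost_P R X)
  (l : seq X) :
  (forall p, p \in l -> ~ nbhs p [set p]) ->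
  exists U, cozero_set R U /\ dense U /\ (forall p, p \in l -> ~ U p).
Proof.
elim: l => [|p l IH] Hl.
  exists setT; split; first exact: cozeroT.
  split; last by [].
  by move=> O O0 _; rewrite setIT.
have [|U [cU [dU aU]]] := IH.
  by move=> q ql; apply: Hl; rewrite in_cons ql orbT.
have [V [cV [dV ctV]]] := nap p.
exists (U `&` V); split; first exact: cozeroI.
split; first exact: denseI (@cozero_open R X U cU) dU dV.
move=> q; rewrite in_cons => /orP [/eqP -> | ql] [Uq Vq].
  by apply: (Hl p); [rewrite mem_head | exact: (@key R X p V cV ctV Vq)].
exact: (aU q ql).
Qed.

Theorem theorem4p2 (R : realType) (X : topologicalType)
  (hT1 : @accessible_space X) :
  (forall f : X -> R, CF f -> Tpp f) <-> nowhere_almost_P R X.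
Proof.
split.
  move=> H p; apply: H; rewrite /CF.
  apply: sub_finite_set (finite_set1 p) => x /= ncont.
  apply: contrapT => xp; apply: ncont.
  apply: (@near_cst_continuous X R (\1_[set p] x) (\1_[set p]) x).
  have nx : nbhs x (~` [set p]).
    apply: open_nbhs_nbhs; split; last exact: xp.
    exact/closed_openC/accessible_closed_set1.
  apply: filterS nx => y yp.
  by rewrite !indicE !memNset.
move=> nap f cf.
have [|U [cU [dU av]]] := @avoid R X nap (finmap.enum_fset (fset_set [set x | ~ {for x, continuous f}])).
  move=> p; rewrite in_fset_set // => /set_mem Dp iso; apply: Dp.
  exact: isolated_cont.
exists U; split; first by [].
split; first by [].
apply: continuous_in_subspaceT => x /set_mem Ux.
apply: contrapT => nc; apply: (av x) _ Ux.
by rewrite in_fset_set //; exact: mem_set.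
Qed.
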